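(* Let $\Omega$ be a semigroup and let $(D, \{ \prec_\alpha, \succ_\alpha, \curlyvee_{\alpha, \beta} \}_{\alpha, \beta \in \Omega})$ be an NS-family algebra over a field $\mathbf{k}$. Define bilinear operations on $D \otimes \mathbf{k}\Omega$ by $$(x \otimes \alpha) \prec (y \otimes \beta) := (x \prec_\beta y ) \otimes \alpha \beta, \quad (x \otimes \alpha) \succ (y \otimes \beta) := (x \succ_\alpha y) \otimes \alpha \beta, \quad (x \otimes \alpha) \curlyvee (y \otimes \beta) := (x \curlyvee_{\alpha, \beta} y) \otimes \alpha \beta,$$ for $x,y\in D$, $\alpha,\beta\in\Omega$ (extended bilinearly). Then $(D \otimes \mathbf{k}\Omega, \prec, \succ, \curlyvee)$ is an NS-algebra. Further, if $f : D \to D'$ is a morphism of NS-family algebras from $(D, \{ \prec_\alpha, \succ_\alpha, \curlyvee_{\alpha, \beta} \})$ to $(D', \{ \prec'_\alpha, \succ'_\alpha, \curlyvee'_{\alpha, \beta} \})$, then the linear map $F : D \otimes \mathbf{k}\Omega \to D' \otimes \mathbf{k}\Omega$, $F(x \otimes \alpha) = f(x) \otimes \alpha$, is a morphism between the induced NS-algebras (i.e. it preserves $\prec,\succ,\curlyvee$).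
   Context: $\mathbf{k}$ is a field of characteristic $0$, $\Omega$ a semigroup and $\mathbf{k}\Omega$ its semigroup algebra (vector space with basis $\Omega$). An NS-algebra is a vector space $D$ with bilinear maps $\prec,\succ,\curlyvee: D\otimes D\to D$ such that for all $x,y,z$: $(x \prec y) \prec z = x \prec ( y \prec z + y \succ z + y \curlyvee z)$; $(x \succ y) \prec z = x \succ (y \prec z)$; $(x \prec y + x \succ y + x \curlyvee y) \succ z = x \succ (y \succ z)$; $( x \prec y + x \succ y + x \curlyvee y ) \curlyvee z + (x \curlyvee y) \prec z = x \succ (y \curlyvee z) + x \curlyvee ( y \prec z + y \succ z + y \curlyvee z )$. An NS-family algebra is a vector space $D$ with bilinear maps $\{ \prec_\alpha, \succ_\alpha, \curlyvee_{\alpha, \beta} : D \otimes D \to D \}_{\alpha, \beta \in \Omega}$ such that for all $x,y,z\in D$, $\alpha,\beta,\gamma\in\Omega$: (1) $(x \prec_\alpha y) \prec_\beta z = x \prec_{\alpha \beta} ( y \prec_\beta z + y \succ_\alpha z + y \curlyvee_{\alpha, \beta} z)$; (2) $(x \succ_\alpha y) \prec_\beta z = x \succ_\alpha (y \prec_\beta z)$; (3) $(x \prec_\beta y + x \succ_\alpha y + x \curlyvee_{\alpha, \beta} y) \succ_{\alpha \beta} z = x \succ_\alpha (y \succ_\beta z)$; (4) $( x \prec_\beta y + x \succ_\alpha y + x \curlyvee_{\alpha, \beta} y ) \curlyvee_{\alpha \beta, \gamma} z + (x \curlyvee_{\alpha, \beta} y) \prec_\gamma z = x \succ_\alpha (y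 \curlyvee_{\beta, \gamma} z) + x \curlyvee_{\alpha, \beta \gamma} ( y \prec_\gamma z + y \succ_\beta z + y \curlyvee_{\beta, \gamma} z )$. A morphism of NS-family algebras is a linear map $f$ with $f(x\prec_\alpha y)=f(x)\prec'_\alpha f(y)$, $f(x\succ_\alpha y)=f(x)\succ'_\alpha f(y)$, $f(x\curlyvee_{\alpha,\beta} y)=f(x)\curlyvee'_{\alpha,\beta} f(y)$ for all $x,y,\alpha,\beta$. *)

(* Defs.v *)
(* D (x) kOmega is modelled as the k-space of finitely
   supported functions Omega -> D, i.e. multinomials' {malg D[Omega]}. *)
From HB Require Import structures.
From mathcomp Require Import all_boot all_order all_algebra.
From mathcomp Require Import finmap.
From mathcomp.multinomials Require Export monalg.
Set Implicit Arguments. Unset Strict Implicit. Unset Printing Implicit Defensive.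
Import GRing.Theory.
Local Open Scope ring_scope.

Definition bilinear_op (k : fieldType) (V W : lmodType k) (op : V -> V -> W) : Prop :=
  (forall (c : k) x1 x2 y, op (c *: x1 + x2) y = c *: op x1 y + op x2 y) /\
  (forall (c : k) x y1 y2, op x (c *: y1 + y2) = c *: op x y1 + op x y2).

Definition NS_axioms (A : zmodType) (prec succ vee : A -> A -> A) : Prop :=
  forall x y z : A,
  [/\ prec (prec x y) z = prec x (prec y z + succ y z + vee y z),
      prec (succ x y) z = succ x (prec y z),
      succ (prec x y + succ x y + vee x y) z = succ x (succ y z) &
      vee (prec x y + succ x y + vee x y) z + prec (vee x y) z
        = succ x (vee y z) + vee x (prec y z + succ y z + vee y z)].

Definition NS_family_algebra (k : fieldType) (Omega : Type) (mul : Omega -> Omega -> Omega)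
  (D : lmodType k) (prec succ : Omega -> D -> D -> D)
  (vee : Omega -> Omega -> D -> D -> D) : Prop :=
  [/\ forall a, bilinear_op (prec a),
      forall a, bilinear_op (succ a),
      forall a b, bilinear_op (vee a b) &
  forall (x y z : D) (a b g : Omega),
  [/\ prec b (prec a x y) z = prec (mul a b) x (prec b y z + succ a y z + vee a b y z),
      prec b (succ a x y) z = succ a x (prec b y z),
      succ (mul a b) (prec b x y + succ a x y + vee a b x y) z = succ a x (succ b y z) &
      vee (mul a b) g (prec b x y + succ a x y + vee a b x y) z + prec g (vee a b x y) z
        = succ a x (vee b g y z) + vee a (mul b g) x (prec g y z + succ b y z + vee b g y z)]].

Definition NS_family_morphism (k : fieldType) (Omega : Type) (D D' : lmodType k)
  (prec succ : Omega -> D -> D -> D) (vee : Omega -> Omega -> D -> D -> D)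
  (prec' succ' : Omega -> D' -> D' -> D') (vee' : Omega -> Omega -> D' -> D' -> D')
  (f : D -> D') : Prop :=
  [/\ forall a x y, f (prec a x y) = prec' a (f x) (f y),
      forall a x y, f (succ a x y) = succ' a (f x) (f y) &
      forall a b x y, f (vee a b x y) = vee' a b (f x) (f y)].

(* D (x) kOmega := {malg D[Omega]}; the pure tensor x (x) a is << x *g a >>. *)
Section Tensor.
Variables (k : fieldType) (Omega : choiceType) (mul : Omega -> Omega -> Omega).
Variable (D : lmodType k).

Definition tscale (c : k) (u : {malg D[Omega]}) : {malg D[Omega]} :=
  \sum_(a <- msupp u) << c *: u@_a *g a >>.

Definition tensor_op (op : Omega -> Omega -> D -> D -> D)
  (u v : {malg D[Omega]}) : {malg D[Omega]} :=
  \sum_(a <- msupp u) \sum_(b <- msupp v) << op a b u@_a v@_b *g mul a b >>.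

Definition tprec (prec : Omega -> D -> D -> D) :=
  tensor_op (fun a b x y => prec b x y).
Definition tsucc (succ : Omega -> D -> D -> D) :=
  tensor_op (fun a b x y => succ a x y).
Definition tvee (vee : Omega -> Omega -> D -> D -> D) :=
  tensor_op (fun a b x y => vee a b x y).

Definition tbilinear (op : {malg D[Omega]} -> {malg D[Omega]} -> {malg D[Omega]}) : Prop :=
  (forall (c : k) u1 u2 v, op (tscale c u1 + u2) v = tscale c (op u1 v) + op u2 v) /\
  (forall (c : k) u v1 v2, op u (tscale c v1 + v2) = tscale c (op u v1) + op u v2).
End Tensor.

Definition tensor_map (Omega : choiceType) (D D' : zmodType) (f : D -> D')
  (u : {malg D[Omega]}) : {malg D'[Omega]} :=
  \sum_(a <- msupp u) << f u@_a *g a >>.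

(* Main.v *)
Require Import Defs.
From HB Require Import structures.
From mathcomp Require Import all_boot all_order all_algebra.
From mathcomp Require Import finmap.
From mathcomp.multinomials Require Import monalg.
Import GRing.Theory.
Local Open Scope ring_scope.


Module Helpers.
Set Implicit Arguments. Unset Strict Implicit. Unset Printing Implicit Defensive.
Local Open Scope fset_scope.
Local Open Scope ring_scope.

Section H.
Variables (Omega : choiceType).

Lemma mcoeff_sumU (G : zmodType) (d : {fset Omega}) (F : Omega -> G) g :
  (\sum_(a <- d) << F a *g a >>)@_g = if g \in d then F g else 0.
Proof.
rewrite raddf_sum /=; case: ifP => [gd|gnd].
  rewrite (big_fsetD1 g) //= mcoeffUU big1_fset ?addr0 // => a.
  by rewrite in_fsetD1 => /andP [ag _] _; rewrite mcoeffU (negbTE ag).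
rewrite big1_fset // => a ad _; rewrite mcoeffU; case: eqP => // ag.
by rewrite ag gnd in ad.
Qed.

Lemma msupp_sub (G : zmodType) (w : {malg G[Omega]}) (d : {fset Omega}) :
  (forall g, g \notin d -> w@_g = 0) -> msupp w `<=` d.
Proof.
move=> H; apply/fsubsetP => g; rewrite -mcoeff_neq0; apply: contraR.
by move=> /H ->; rewrite eqxx.
Qed.

Lemma add0 (G H : zmodType) (f : G -> H) :
  (forall x y, f (x + y) = f x + f y) -> f 0 = 0.
Proof.
move=> Hf; have := Hf 0 0; rewrite addr0 => h.
by apply: (@addrI _ (f 0)); rewrite addr0 -h.
Qed.

Lemma sum_morph (G H : zmodType) (f : G -> H) I (s : seq I) (F : I -> G) :
  (forall x y, f (x + y) = f x + f y) ->
  f (\sum_(i <- s) F i) = \sum_(i <- s) f (F i).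
Proof.
move=> Hf; elim: s => [|x s IH]; first by rewrite !big_nil (add0 Hf).
by rewrite !big_cons Hf IH.
Qed.

Variables (k : fieldType) (mul : Omega -> Omega -> Omega) (D : lmodType k).
Local Notation M := {malg D[Omega]}.

Section Bil.
Variable (op : D -> D -> D) (Hop : bilinear_op op).
Lemma bilDl x1 x2 y : op (x1 + x2) y = op x1 y + op x2 y.
Proof. by have := (Hop.1 1 x1 x2 y); rewrite !scale1r. Qed.
Lemma bilDr x y1 y2 : op x (y1 + y2) = op x y1 + op x y2.
Proof. by have := (Hop.2 1 x y1 y2); rewrite !scale1r. Qed.
Lemma bil0l y : op 0 y = 0.
Proof. exact: (add0 (f := op^~ y) (fun a b => bilDl a b y)). Qed.
Lemma bil0r x : op x 0 = 0.
Proof. exact: (add0 (f := op x) (bilDr x)). Qed.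
Lemma bilZl c x y : op (c *: x) y = c *: op x y.
Proof. by have := (Hop.1 c x 0 y); rewrite !addr0 bil0l addr0. Qed.
Lemma bilZr c x y : op x (c *: y) = c *: op x y.
Proof. by have := (Hop.2 c x y 0); rewrite !addr0 bil0r addr0. Qed.
End Bil.

Lemma tscaleE c (u : M) g : (tscale c u)@_g = c *: u@_g.
Proof.
rewrite /tscale mcoeff_sumU; case: ifP => // /negbT /mcoeff_outdom ->.
by rewrite scaler0.
Qed.

Lemma tscaleD c (u v : M) : tscale c (u + v) = tscale c u + tscale c v.
Proof. by apply/malgP => g; rewrite mcoeffD !tscaleE mcoeffD scalerDr. Qed.

Lemma tscaleU c x a : tscale c << x *g a >> = << c *: x *g a >> :> M.
Proof. by apply/malgP => g; rewrite tscaleE !mcoeffU scalerMnr. Qed.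

Lemma tscale_sub c (u : M) : msupp (tscale c u) `<=` msupp u.
Proof. by apply: msupp_sub => g /mcoeff_outdom H; rewrite tscaleE H scaler0. Qed.

Section Op.
Variable (op : Omega -> Omega -> D -> D -> D).
Hypothesis Hop : forall a b, bilinear_op (op a b).

Lemma tensor_opw (u v : M) (d1 d2 : {fset Omega}) :
  msupp u `<=` d1 -> msupp v `<=` d2 ->
  tensor_op mul op u v =
  \sum_(a <- d1) \sum_(b <- d2) << op a b u@_a v@_b *g mul a b >>.
Proof.
move=> le1 le2; rewrite /tensor_op (big_fset_incl _ le1) /=.
  apply/eq_bigr=> a _; apply/big_fset_incl => // b _ /mcoeff_outdom ->.
  by rewrite bil0r ?monalgU0.
move=> a _ /mcoeff_outdom ->.
by rewrite big1 // => b _; rewrite bil0l // monalgU0.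
Qed.

Lemma tensor_opDl (u1 u2 v : M) :
  tensor_op mul op (u1 + u2) v = tensor_op mul op u1 v + tensor_op mul op u2 v.
Proof.
set d := msupp u1 `|` msupp u2.
rewrite (@tensor_opw _ _ d (msupp v)) ?msuppD_le //.
rewrite (@tensor_opw u1 _ d (msupp v)) ?fsubsetUl //.
rewrite (@tensor_opw u2 _ d (msupp v)) ?fsubsetUr //.
rewrite -big_split; apply eq_bigr => a _; rewrite -big_split.
by apply eq_bigr => b _ /=; rewrite mcoeffD bilDl // monalgUD.
Qed.

Lemma tensor_opDr (u v1 v2 : M) :
  tensor_op mul op u (v1 + v2) = tensor_op mul op u v1 + tensor_op mul op u v2.
Proof.
set d := msupp v1 `|` msupp v2.
rewrite (@tensor_opw _ _ (msupp u) d) ?msuppD_le //.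
rewrite (@tensor_opw _ v1 (msupp u) d) ?fsubsetUl //.
rewrite (@tensor_opw _ v2 (msupp u) d) ?fsubsetUr //.
rewrite -big_split; apply eq_bigr => a _; rewrite -big_split.
by apply eq_bigr => b _ /=; rewrite mcoeffD bilDr // monalgUD.
Qed.

Lemma tensor_opU x a y b :
  tensor_op mul op << x *g a >> << y *g b >> = << op a b x y *g mul a b >>.
Proof.
by rewrite (@tensor_opw _ _ [fset a] [fset b]) ?msuppU_le // !big_seq_fset1 !mcoeffUU.
Qed.

Lemma tscale_sum c I (s : seq I) (F : I -> M) :
  tscale c (\sum_(i <- s) F i) = \sum_(i <- s) tscale c (F i).
Proof. exact: sum_morph (tscaleD c). Qed.

Lemma tensor_opZl c (u v : M) :
  tensor_op mul op (tscale c u) v = tscale c (tensor_op mul op u v).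
Proof.
rewrite (@tensor_opw _ _ (msupp u) (msupp v)) ?tscale_sub //.
rewrite /tensor_op tscale_sum; apply eq_bigr => a _.
rewrite tscale_sum; apply eq_bigr => b _.
by rewrite tscaleU tscaleE bilZl.
Qed.

Lemma tensor_opZr c (u v : M) :
  tensor_op mul op u (tscale c v) = tscale c (tensor_op mul op u v).
Proof.
rewrite (@tensor_opw _ _ (msupp u) (msupp v)) ?tscale_sub //.
rewrite /tensor_op tscale_sum; apply eq_bigr => a _.
rewrite tscale_sum; apply eq_bigr => b _.
by rewrite tscaleU tscaleE bilZr.
Qed.

Lemma tensor_op_bil : tbilinear (tensor_op mul op).
Proof.
split=> c *; first by rewrite tensor_opDl tensor_opZl.
by rewrite tensor_opDr tensor_opZr.
Qed.
End Op.

Definition biadd (B : M -> M -> M) :=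
  (forall u1 u2 v, B (u1 + u2) v = B u1 v + B u2 v) /\
  (forall u v1 v2, B u (v1 + v2) = B u v1 + B u v2).
Definition triadd (F : M -> M -> M -> M) :=
  [/\ forall u1 u2 v w, F (u1 + u2) v w = F u1 v w + F u2 v w,
      forall u v1 v2 w, F u (v1 + v2) w = F u v1 w + F u v2 w &
      forall u v w1 w2, F u v (w1 + w2) = F u v w1 + F u v w2].

Lemma triadd_eq (F G : M -> M -> M -> M) : triadd F -> triadd G ->
  (forall x a y b z g, F << x *g a >> << y *g b >> << z *g g >>
                     = G << x *g a >> << y *g b >> << z *g g >>) ->
  forall u v w, F u v w = G u v w.
Proof.
move=> [F1 F2 F3] [G1 G2 G3] H u v w.
rewrite [u]monalgE.
have -> := @sum_morph _ _ (fun x => F x v w) _ (msupp u) (fun a => << u@_a *g a >>)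
  (fun x y => F1 x y v w).
have -> := @sum_morph _ _ (fun x => G x v w) _ (msupp u) (fun a => << u@_a *g a >>)
  (fun x y => G1 x y v w).
apply: eq_bigr => a _.
rewrite [v]monalgE.
have -> := @sum_morph _ _ (fun x => F << u@_a *g a >> x w) _ (msupp v)
  (fun a => << v@_a *g a >>) (fun x y => F2 _ x y w).
have -> := @sum_morph _ _ (fun x => G << u@_a *g a >> x w) _ (msupp v)
  (fun a => << v@_a *g a >>) (fun x y => G2 _ x y w).
apply: eq_bigr => b _.
rewrite [w]monalgE.
have -> := @sum_morph _ _ (fun x => F << u@_a *g a >> << v@_b *g b >> x) _ (msupp w)
  (fun a => << w@_a *g a >>) (fun x y => F3 _ _ x y).
have -> := @sum_morph _ _ (fun x => G << u@_a *g a >> << v@_b *g b >> x) _ (msupp w)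
  (fun a => << w@_a *g a >>) (fun x y => G3 _ _ x y).
by apply: eq_bigr => g _.
Qed.

Lemma triaddL B1 B2 : biadd B1 -> biadd B2 -> triadd (fun u v w => B2 (B1 u v) w).
Proof.
by move=> [B11 B12] [B21 B22]; split => * /=; rewrite ?B11 ?B12 ?B21 ?B22.
Qed.

Lemma triaddR B1 B2 : biadd B1 -> biadd B2 -> triadd (fun u v w => B2 u (B1 v w)).
Proof.
by move=> [B11 B12] [B21 B22]; split => * /=; rewrite ?B11 ?B12 ?B21 ?B22.
Qed.

Lemma triaddD F G : triadd F -> triadd G -> triadd (fun u v w => F u v w + G u v w).
Proof.
by move=> [F1 F2 F3] [G1 G2 G3]; split => * /=;
  rewrite ?F1 ?F2 ?F3 ?G1 ?G2 ?G3 addrACA.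
Qed.

Lemma biaddD B1 B2 : biadd B1 -> biadd B2 -> biadd (fun u v => B1 u v + B2 u v).
Proof.
by move=> [B11 B12] [B21 B22]; split => * /=; rewrite ?B11 ?B12 ?B21 ?B22 addrACA.
Qed.

Lemma tensor_op_biadd op : (forall a b, bilinear_op (op a b)) ->
  biadd (tensor_op mul op).
Proof. by move=> Hop; split => *; rewrite ?tensor_opDl ?tensor_opDr. Qed.

Section NS.
Variables (prec succ : Omega -> D -> D -> D) (vee : Omega -> Omega -> D -> D -> D).
Hypothesis mulA : associative mul.
Hypothesis HD : NS_family_algebra mul prec succ vee.

Lemma NS_tensor : NS_axioms (tprec mul prec) (tsucc mul succ) (tvee mul vee).
Proof.
have [Hp Hs Hv Hax] := HD.
have bP : biadd (tprec mul prec) by apply: tensor_op_biadd => a b; apply: Hp.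
have bS : biadd (tsucc mul succ) by apply: tensor_op_biadd => a b; apply: Hs.
have bV : biadd (tvee mul vee) by apply: tensor_op_biadd => a b; apply: Hv.
have bC := biaddD (biaddD bP bS) bV.
have PU x a y b : tprec mul prec << x *g a >> << y *g b >> = << prec b x y *g mul a b >>.
  by apply: tensor_opU => a' b'; apply: Hp.
have SU x a y b : tsucc mul succ << x *g a >> << y *g b >> = << succ a x y *g mul a b >>.
  by apply: tensor_opU => a' b'; apply: Hs.
have VU x a y b : tvee mul vee << x *g a >> << y *g b >> = << vee a b x y *g mul a b >>.
  by apply: tensor_opU => a' b'; apply: Hv.
move=> u v w; split.
- move: u v w; apply: (triadd_eq (triaddL bP bP) (triaddR bC bP)).
  move=> x a y b z g /=; rewrite !PU SU VU -!monalgUD PU mulA.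
  by have [-> _ _ _] := Hax x y z b g g.
- move: u v w; apply: (triadd_eq (triaddL bS bP) (triaddR bP bS)).
  move=> x a y b z g /=; rewrite !PU !SU PU mulA.
  by have [_ -> _ _] := Hax x y z a g g.
- move: u v w; apply: (triadd_eq (triaddL bC bS) (triaddR bS bS)).
  move=> x a y b z g /=; rewrite PU !SU VU -!monalgUD SU mulA.
  by have [_ _ -> _] := Hax x y z a b g.
- move: u v w; apply: (triadd_eq (triaddD (triaddL bC bV) (triaddL bV bP))
                                  (triaddD (triaddR bV bS) (triaddR bC bV))).
  move=> x a y b z g /=; rewrite !PU !SU !VU -!monalgUD !PU !SU !VU mulA -monalgUD.
  by rewrite -monalgUD; have [_ _ _ ->] := Hax x y z a b g.
Qed.
End NS.
End H.

Section Map.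
Variables (Omega : choiceType) (k : fieldType) (mul : Omega -> Omega -> Omega).
Variables (D D' : lmodType k) (f : {linear D -> D'}).
Local Notation M := {malg D[Omega]}.
Local Notation M' := {malg D'[Omega]}.

Lemma tmapE (u : M) g : (tensor_map f u)@_g = f u@_g.
Proof.
rewrite /tensor_map mcoeff_sumU; case: ifP => // /negbT /mcoeff_outdom ->.
by rewrite linear0.
Qed.

Lemma tmap_sub (u : M) : msupp (tensor_map f u) `<=` msupp u.
Proof. by apply: msupp_sub => g /mcoeff_outdom H; rewrite tmapE H linear0. Qed.

Lemma tmapD (u v : M) : tensor_map f (u + v) = tensor_map f u + tensor_map f v.
Proof. by apply/malgP => g; rewrite mcoeffD !tmapE mcoeffD linearD. Qed.

Lemma tmapU x (a : Omega) : tensor_map f << x *g a >> = << f x *g a >>.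
Proof. by apply/malgP => g; rewrite tmapE !mcoeffU linearMn. Qed.

Lemma tmap_lin c (u v : M) :
  tensor_map f (tscale c u + v) = tscale c (tensor_map f u) + tensor_map f v.
Proof.
by apply/malgP => g; rewrite tmapE raddfD /= tscaleE linearP raddfD /= tscaleE !tmapE.
Qed.

Lemma tmap_op (op : Omega -> Omega -> D -> D -> D)
  (op' : Omega -> Omega -> D' -> D' -> D') :
  (forall a b, bilinear_op (op' a b)) ->
  (forall a b x y, f (op a b x y) = op' a b (f x) (f y)) ->
  forall u v, tensor_map f (tensor_op mul op u v)
            = tensor_op mul op' (tensor_map f u) (tensor_map f v).
Proof.
move=> Hop' Hf u v.
rewrite (@tensor_opw _ _ mul _ op' Hop' _ _ (msupp u) (msupp v)) ?tmap_sub //.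
rewrite /tensor_op (sum_morph _ _ tmapD); apply: eq_bigr => a _.
rewrite (sum_morph _ _ tmapD); apply: eq_bigr => b _.
by rewrite tmapU !tmapE Hf.
Qed.
End Map.

End Helpers.
Import Helpers.

Theorem theorem3p13 (k : fieldType) (k_char0 : [pchar k] =i pred0)
  (Omega : choiceType) (mul : Omega -> Omega -> Omega) (mulA : associative mul)
  (D : lmodType k) (prec succ : Omega -> D -> D -> D)
  (vee : Omega -> Omega -> D -> D -> D)
  (HD : NS_family_algebra mul prec succ vee) :
  (* D (x) kOmega with the induced operations is an NS-algebra *)
  [/\ tbilinear (tprec mul prec), tbilinear (tsucc mul succ),
      tbilinear (tvee mul vee) &
      NS_axioms (tprec mul prec) (tsucc mul succ) (tvee mul vee)] /\
  (* functoriality *)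
  (forall (D' : lmodType k) (prec' succ' : Omega -> D' -> D' -> D')
     (vee' : Omega -> Omega -> D' -> D' -> D') (f : {linear D -> D'}),
     NS_family_algebra mul prec' succ' vee' ->
     NS_family_morphism prec succ vee prec' succ' vee' f ->
     [/\ forall (c : k) u v,
           tensor_map (Omega:=Omega) f (tscale c u + v)
           = tscale c (tensor_map f u) + tensor_map f v,
         forall u v : {malg D[Omega]},
           tensor_map f (tprec mul prec u v)
           = tprec mul prec' (tensor_map f u) (tensor_map f v),
         forall u v : {malg D[Omega]},
           tensor_map f (tsucc mul succ u v)
           = tsucc mul succ' (tensor_map f u) (tensor_map f v) &
         forall u v : {malg D[Omega]},
           tensor_map f (tvee mul vee u v)
           = tvee mul vee' (tensor_map f u) (tensor_map f v)]).
Proof.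
split.
  have [Hp Hs Hv _] := HD.
  split.
  - by apply: tensor_op_bil => a b; apply: Hp.
  - by apply: tensor_op_bil => a b; apply: Hs.
  - by apply: tensor_op_bil => a b; apply: Hv.
  - exact: NS_tensor mulA HD.
move=> D' prec' succ' vee' f HD' [fp fs fv].
have [Hp' Hs' Hv' _] := HD'.
split.
- exact: tmap_lin.
- by apply: tmap_op => [a b|a b x y]; [apply: Hp' | apply: fp].
- by apply: tmap_op => [a b|a b x y]; [apply: Hs' | apply: fs].
- by apply: tmap_op => [a b|a b x y]; [apply: Hv' | apply: fv].
Qed.
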